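(* In the monkey model with $K\ge2$ letters, space probability $s\in(0,1)$, and equal letter probabilities $q_1=\cdots=q_K=(1-s)/K$, every rank $r\ge1$ satisfies $$\frac1K\,B_r^{\log_{q_1}K}<r<\frac{K}{K-1}\,B_r^{\log_{q_1}K},$$ so the power-law exponent is $-\beta=1/\log_{q_1}K=\frac{\log(1-s)}{\log K}-1$. In particular, for fixed $s$, $-\beta\to-1$ as $K\to\infty$.
   Context: Monkey model: a keyboard has $K$ letters $L_1,\dots,L_K$ struck independently with probabilities $q_1,\dots,q_K$ and a space character with probability $s$, where $\sum_i q_i+s=1$. A word is a finite (possibly empty) string $L_{i_1}\cdots L_{i_n}$ of letters followed by a space. Its base value is $B=q_{i_1}\cdots q_{i_n}$ (the empty word has base value $1$). The base values of all finitely long words, listed with multiplicity in non-increasing order with ties broken by alphabetical order, are denoted $B_1=1\ge B_2\ge\cdots$; $r$ is the rank of $B_r$. *)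

(* Defs.v *)
From Stdlib Require Import Reals Lra Lia List Arith.
Import ListNotations.
Open Scope R_scope.

(* Letters L_1..L_K are encoded as the naturals 0..K-1 (L_{i+1} <-> i),
   ordered alphabetically by the natural order.  A word is the finite string
   of letters preceding the space; we represent it by its list of letters. *)
Definition word := list nat.

Definition valid_word (K : nat) (w : word) : Prop :=
  Forall (fun i => (i < K)%nat) w.

Definition base_value (q : nat -> R) (w : word) : R :=
  fold_right (fun i acc => q i * acc) 1 w.

Fixpoint alpha_lt (u v : word) : Prop :=
  match u, v with
  | [], _ :: _ => True
  | a :: u', b :: v' => (a < b)%nat \/ (a = b /\ alpha_lt u' v')
  | _, _ => False
  end.

(* f r (for r >= 1) is the word of rank r: f is a bijection from the
   positive integers onto the valid words, listing the base values in
   non-increasing order with ties broken alphabetically.  Then B_r is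
   base_value q (f r). *)
Definition is_rank_enumeration (K : nat) (q : nat -> R) (f : nat -> word) : Prop :=
  (forall r, (1 <= r)%nat -> valid_word K (f r)) /\
  (forall r r', (1 <= r)%nat -> (1 <= r')%nat -> f r = f r' -> r = r') /\
  (forall w, valid_word K w -> exists r, (1 <= r)%nat /\ f r = w) /\
  (forall r r', (1 <= r)%nat -> (r < r')%nat ->
     base_value q (f r) > base_value q (f r') \/
     (base_value q (f r) = base_value q (f r') /\ alpha_lt (f r) (f r'))).

Definition logb (b x : R) : R := ln x / ln b.

(* Main.v *)
Require Import Defs.
From Stdlib Require Import Reals List Lra Lia Sorted Arith ZArith.
Import ListNotations.
Open Scope R_scope.

Fixpoint W (K m : nat) : list word :=
  match m with
  | O => [[]]
  | S m' => concat (map (fun i => map (cons i) (W K m')) (seq 0 K))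
  end.

Fixpoint L (K N : nat) : list word :=
  match N with
  | O => []
  | S N' => L K N' ++ W K N'
  end.

Fixpoint SS (K N : nat) : nat :=
  match N with
  | O => O
  | S N' => (SS K N' + K ^ N')%nat
  end.

Lemma W_in K m : forall w, In w (W K m) <-> valid_word K w /\ length w = m.
Proof.
  unfold valid_word.
  induction m as [|m IH]; intros w; simpl.
  - split.
    + intros [<-|[]]. split; [constructor|reflexivity].
    + intros [_ H]. destruct w; [left; reflexivity| discriminate].
  - rewrite in_concat. split.
    + intros [l [Hl Hw]]. apply in_map_iff in Hl as [i [<- Hi]].
      apply in_map_iff in Hw as [u [<- Hu]]. apply in_seq in Hi.
      apply IH in Hu as [Hv Hlen]. split; [constructor; [lia|exact Hv] | simpl; lia].
    + intros [Hv Hlen]. destruct w as [|i u]; [discriminate|].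
      inversion Hv; subst. simpl in Hlen.
      exists (map (cons i) (W K m)). split.
      * apply in_map_iff. exists i. split; [reflexivity| apply in_seq; lia].
      * apply in_map. apply IH. split; [assumption | lia].
Qed.

Lemma len_concat_map_const (A B: Type) (g : A -> list B) c ds :
  (forall i, length (g i) = c) -> length (concat (map g ds)) = (length ds * c)%nat.
Proof. intros H; induction ds; simpl; [reflexivity|]. rewrite length_app, H, IHds. reflexivity. Qed.

Lemma W_len K m : length (W K m) = (K ^ m)%nat.
Proof. induction m; simpl; [reflexivity|].
  rewrite (len_concat_map_const _ _ _ (K^m)%nat). rewrite length_seq. reflexivity.
  intros i. rewrite length_map. exact IHm. Qed.

Lemma L_in K N : forall w, In w (L K N) <-> valid_word K w /\ (length w < N)%nat.
Proof.
  induction N as [|N IH]; intros w; simpl.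
  - split; [intros []| lia].
  - rewrite in_app_iff, IH, W_in. split.
    + intros [[? ?]|[? ?]]; split; auto; lia.
    + intros [? ?]. destruct (Nat.eq_dec (length w) N); [right|left]; split; auto; lia.
Qed.

Lemma L_len K N : length (L K N) = SS K N.
Proof. induction N; simpl; [reflexivity|]. rewrite length_app, IHN, W_len. reflexivity. Qed.

Definition Rw (u v : word) : Prop :=
  (length u < length v)%nat \/ (length u = length v /\ alpha_lt u v).

Lemma alpha_irrefl u : ~ alpha_lt u u.
Proof. induction u; simpl; [tauto|]. intros [H|[_ H]]; [lia| tauto]. Qed.

Lemma Rw_irrefl u : ~ Rw u u.
Proof. intros [H|[_ H]]; [lia| exact (alpha_irrefl u H)]. Qed.

Lemma SS_app {A} (R: A->A->Prop) l1 l2 : StronglySorted R l1 -> StronglySorted R l2 ->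
  (forall a b, In a l1 -> In b l2 -> R a b) -> StronglySorted R (l1++l2).
Proof.
  induction l1; simpl; auto. intros H1 H2 H. inversion H1; subst. constructor.
  - apply IHl1; auto.
  - apply Forall_app; split; [assumption|]. apply Forall_forall; intros; apply H; auto.
Qed.

Lemma SS_map {A} (R: A->A->Prop) g l : StronglySorted R l ->
  (forall a b, R a b -> R (g a) (g b)) -> StronglySorted R (map g l).
Proof.
  induction l; simpl; intros H Hg; constructor; inversion H; subst; auto.
  apply Forall_map. eapply Forall_impl; [|eassumption]. simpl; auto.
Qed.

Lemma SS_NoDup {A} (R: A->A->Prop) l : StronglySorted R l -> (forall a, ~ R a a) -> NoDup l.
Proof.
  induction l; intros H Hi; constructor; inversion H; subst; auto.
  intro Hin. rewrite Forall_forall in H3. exact (Hi a (H3 a Hin)).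
Qed.

Lemma SS_nth {A} (R: A->A->Prop) d l : StronglySorted R l ->
  forall i j, (i < j < length l)%nat -> R (nth i l d) (nth j l d).
Proof.
  induction l; simpl; intros H i j Hij; [lia|]. inversion H; subst.
  destruct i, j; try lia.
  - rewrite Forall_forall in H3. apply H3. apply nth_In. lia.
  - apply IHl; auto; lia.
Qed.

Lemma blocks_sorted K m : StronglySorted Rw (W K m) ->
  forall k a, StronglySorted Rw (concat (map (fun i => map (cons i) (W K m)) (seq a k))).
Proof.
  intros IH k. induction k as [|k IHk]; intros a; simpl; [constructor|].
    apply SS_app.
    + apply SS_map; auto. intros u v [H|[H1 H2]]; [left; simpl; lia| right; simpl; split; [lia| right; auto]].
    + apply IHk.
    + intros x y Hx Hy. apply in_map_iff in Hx as [u [<- Hu]].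
      apply in_concat in Hy as [l [Hl Hy]]. apply in_map_iff in Hl as [i [<- Hi]].
      apply in_map_iff in Hy as [v [<- Hv]]. apply in_seq in Hi.
      apply W_in in Hu as [_ Hu]. apply W_in in Hv as [_ Hv].
      right. simpl. split; [lia| left; lia].
Qed.

Lemma W_sorted K m : StronglySorted Rw (W K m).
Proof.
  induction m as [|m IH]; simpl.
  - repeat constructor.
  - apply blocks_sorted; auto.
Qed.

Lemma L_sorted K N : StronglySorted Rw (L K N).
Proof.
  induction N; simpl; [constructor|]. apply SS_app; auto using W_sorted.
  intros a b Ha Hb. apply L_in in Ha. apply W_in in Hb. left; lia.
Qed.

Lemma L_prefix K N N' : (N <= N')%nat -> exists t, L K N' = L K N ++ t.
Proof.
  induction N'; intros H.
  - assert (N = 0%nat) by lia; subst. exists []. reflexivity.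
  - destruct (Nat.eq_dec N (S N')). subst. exists []. rewrite app_nil_r; reflexivity.
    destruct IHN' as [t Ht]; [lia|]. exists (t ++ W K N'). simpl. rewrite Ht, app_assoc. reflexivity.
Qed.

Lemma pow_ge1 K m : (1 <= K)%nat -> (1 <= K ^ m)%nat.
Proof. intros HK; induction m; simpl; nia. Qed.

Lemma SS_ge K N : (1 <= K)%nat -> (N <= SS K N)%nat.
Proof. intros HK; induction N; simpl; [lia|]. pose proof (pow_ge1 K N HK). lia. Qed.

Lemma SS_id K N : (1 <= K)%nat -> ((K-1) * SS K N + 1 = K ^ N)%nat.
Proof.
  intros HK. destruct K as [|k]; [lia|]. replace (S k - 1)%nat with k by lia.
  induction N; simpl; [lia|]. simpl in IHN. nia.
Qed.

Definition fdef K (r : nat) : word := nth (r-1) (L K r) [].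

Lemma fdef_nth K r N : (1 <= K)%nat -> (1 <= r)%nat -> (r - 1 < length (L K N))%nat ->
  fdef K r = nth (r-1) (L K N) [].
Proof.
  intros HK Hr Hl. unfold fdef.
  destruct (L_prefix K r (Nat.max N r)) as [t1 Ht1]; [lia|].
  destruct (L_prefix K N (Nat.max N r)) as [t2 Ht2]; [lia|].
  assert (Hr' : (r - 1 < length (L K r))%nat) by (rewrite L_len; pose proof (SS_ge K r HK); lia).
  rewrite <- (app_nth1 _ t1 [] Hr'), <- Ht1, Ht2, app_nth1; auto.
Qed.

Lemma base_const q w : base_value (fun _ => q) w = q ^ length w.
Proof. unfold base_value; induction w; simpl; [ring| rewrite IHw; ring]. Qed.

Lemma pow_strict q a b : 0 < q < 1 -> (a < b)%nat -> q ^ b < q ^ a.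
Proof.
  intros Hq Hab. replace b with (a + (b - a))%nat by lia. rewrite pow_add.
  pose proof (pow_lt_1_compat q (b - a) ltac:(lra) ltac:(lia)).
  pose proof (pow_lt q a ltac:(lra)). nra.
Qed.

Lemma fdef_enum K q : (1 <= K)%nat -> 0 < q < 1 -> is_rank_enumeration K (fun _ => q) (fdef K).
Proof.
  intros HK Hq.
  assert (Hlen : forall r, (1 <= r)%nat -> (r - 1 < length (L K r))%nat)
    by (intros r Hr; rewrite L_len; pose proof (SS_ge K r HK); lia).
  split; [|split; [|split]].
  - intros r Hr. unfold fdef. pose proof (nth_In _ [] (Hlen r Hr)) as H.
    apply L_in in H. tauto.
  - intros r r' Hr Hr' E.
    assert (HL : forall x N, (1 <= x)%nat -> (x <= N)%nat -> (x - 1 < length (L K N))%nat).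
    { intros x N Hx HxN. pose proof (Hlen x Hx); destruct (L_prefix K x N) as [t Ht]; [lia|].
      rewrite Ht, length_app; lia. }
    rewrite (fdef_nth K r (Nat.max r r')) in E by (auto; apply HL; lia).
    rewrite (fdef_nth K r' (Nat.max r r')) in E by (auto; apply HL; lia).
    pose proof (SS_NoDup _ _ (L_sorted K (Nat.max r r')) Rw_irrefl) as ND.
    pose proof (proj1 (NoDup_nth _ []) ND) as ND2; clear ND; rename ND2 into ND.
    assert (r - 1 = r' - 1)%nat; [|lia].
    apply ND; try apply HL; try lia. exact E.
  - intros w Hw. assert (Hin : In w (L K (S (length w)))) by (apply L_in; auto).
    destruct (In_nth _ _ [] Hin) as [n [Hn E]]. exists (S n). split; [lia|].
    rewrite (fdef_nth K (S n) (S (length w))); [|exact HK|lia|]; cycle 1. { simpl. rewrite Nat.sub_0_r. exact Hn. }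
    replace (S n - 1)%nat with n by lia. exact E.
  - intros r r' Hr Hrr'.
    assert (Hl : (r - 1 < length (L K r'))%nat).
    { pose proof (Hlen r Hr); destruct (L_prefix K r r') as [t Ht]; [lia|];
         rewrite Ht, length_app; lia. }
    rewrite (fdef_nth K r r'); auto. unfold fdef.
    assert (Hij : (r - 1 < r' - 1 < length (L K r'))%nat) by (pose proof (Hlen r' ltac:(lia)); lia).
    pose proof (SS_nth _ [] _ (L_sorted K r') (r-1) (r'-1) Hij) as H.
    rewrite !base_const.
    destruct H as [H|[H1 H2]].
    + left. apply pow_strict; auto.
    + right. split; [f_equal; exact H1 | exact H2].
Qed.

Section Bounds.
Variables (K : nat) (q : R) (f : nat -> word).
Hypothesis HK : (2 <= K)%nat.
Hypothesis Hq : 0 < q < 1.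
Hypothesis Hf : is_rank_enumeration K (fun _ => q) f.

Lemma len_mono r r' : (1 <= r)%nat -> (r < r')%nat -> (length (f r) <= length (f r'))%nat.
Proof.
  intros Hr Hrr'. destruct Hf as [_ [_ [_ Ho]]].
  destruct (Ho r r' Hr Hrr') as [H|[H _]]; rewrite !base_const in H;
  destruct (Nat.le_gt_cases (length (f r)) (length (f r'))) as [|Hc]; auto;
  pose proof (pow_strict q _ _ Hq Hc); lra.
Qed.

Lemma NoDup_map_inj {A B} (g : A -> B) l : NoDup l ->
  (forall x y, In x l -> In y l -> g x = g y -> x = y) -> NoDup (map g l).
Proof.
  induction l; simpl; intros ND Hi; constructor; inversion ND; subst.
  - intros Hin. apply in_map_iff in Hin as [x [E Hx]].
    apply Hi in E; auto. subst. contradiction.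
  - apply IHl; auto.
Qed.

Lemma upper r : (1 <= r)%nat -> (r <= SS K (S (length (f r))))%nat.
Proof.
  intros Hr. rewrite <- L_len. replace r with (length (map f (seq 1 r))) at 1
    by (rewrite length_map, length_seq; reflexivity).
  destruct Hf as [Hv [Hinj _]].
  apply NoDup_incl_length.
  - apply NoDup_map_inj; [apply seq_NoDup|].
    intros x y Hx Hy; apply in_seq in Hx; apply in_seq in Hy. apply Hinj; lia.
  - intros w Hw. apply in_map_iff in Hw as [r' [<- Hr']]. apply in_seq in Hr'.
    apply L_in. split; [apply Hv; lia|].
    destruct (Nat.eq_dec r' r); [subst; lia|]. pose proof (len_mono r' r ltac:(lia) ltac:(lia)). lia.
Qed.

Lemma lower r : (1 <= r)%nat -> (1 <= length (f r))%nat -> (K ^ (length (f r) - 1) <= r - 1)%nat.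
Proof.
  intros Hr Hn. rewrite <- W_len. replace (r - 1)%nat with (length (map f (seq 1 (r-1))))
    by (rewrite length_map, length_seq; reflexivity).
  destruct Hf as [Hv [Hinj [Hsurj _]]].
  apply NoDup_incl_length.
  - exact (SS_NoDup _ _ (W_sorted K _) Rw_irrefl).
  - intros w Hw. apply W_in in Hw as [Hw Hl].
    destruct (Hsurj w Hw) as [r' [Hr' E]]. apply in_map_iff. exists r'. split; auto.
    apply in_seq. split; auto.
    destruct (Nat.lt_ge_cases r' r); [lia|].
    destruct (Nat.eq_dec r' r); [subst; lia|].
    pose proof (len_mono r r' Hr ltac:(lia)). subst. lia.
Qed.

End Bounds.

Lemma ident s K : 0 < s < 1 -> (2 <= K)%nat ->
  1 / logb ((1 - s) / INR K) (INR K) = ln (1 - s) / ln (INR K) - 1.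
Proof.
  intros hs HK. unfold logb.
  assert (HKr : 2 <= INR K) by (replace 2 with (INR 2) by (simpl; ring); apply le_INR; lia).
  assert (HlnK : 0 < ln (INR K)) by (rewrite <- ln_1; apply ln_increasing; lra).
  assert (Hq : 0 < (1 - s) / INR K < 1).
  { split. apply Rdiv_lt_0_compat; lra.
    apply (Rmult_lt_reg_r (INR K)); [lra|]. unfold Rdiv. rewrite Rmult_assoc, Rinv_l by lra. lra. }
  assert (Hlnq : ln ((1 - s) / INR K) < 0) by (rewrite <- ln_1; apply ln_increasing; lra).
  assert (E : ln ((1 - s) / INR K) = ln (1 - s) - ln (INR K)).
  { unfold Rdiv. rewrite ln_mult, ln_Rinv; try lra. apply Rinv_0_lt_compat; lra. }
  rewrite E in *. field. split; lra.
Qed.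

Theorem mainTheorem2 (s : R) (hs : 0 < s < 1) :
  (forall K : nat, (2 <= K)%nat ->
     let q1 := (1 - s) / INR K in
     (exists f, is_rank_enumeration K (fun _ => q1) f) /\
     (forall f, is_rank_enumeration K (fun _ => q1) f ->
        forall r : nat, (1 <= r)%nat ->
          / INR K * Rpower (base_value (fun _ => q1) (f r)) (logb q1 (INR K)) < INR r /\
          INR r < INR K / (INR K - 1) * Rpower (base_value (fun _ => q1) (f r)) (logb q1 (INR K))) /\
     1 / logb q1 (INR K) = ln (1 - s) / ln (INR K) - 1) /\
  Un_cv (fun K : nat => 1 / logb ((1 - s) / INR K) (INR K)) (-1).
Proof.
  split.
  - intros K HK q1.
    assert (HKr : 2 <= INR K) by (replace 2 with (INR 2) by (simpl; ring); apply le_INR; lia).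
    assert (HlnK : 0 < ln (INR K)) by (rewrite <- ln_1; apply ln_increasing; lra).
    assert (Hq : 0 < q1 < 1).
    { unfold q1. split. apply Rdiv_lt_0_compat; lra.
      apply (Rmult_lt_reg_r (INR K)); [lra|]. unfold Rdiv. rewrite Rmult_assoc, Rinv_l by lra. lra. }
    assert (Hlnq : ln q1 < 0) by (rewrite <- ln_1; apply ln_increasing; lra).
    split; [|split].
    + exists (fdef K). apply fdef_enum; auto; lia.
    + intros f Hf r Hr.
      rewrite base_const. remember (length (f r)) as n eqn:Hnd.
      assert (EP : Rpower (q1 ^ n) (logb q1 (INR K)) = INR K ^ n).
      { unfold Rpower, logb. rewrite ln_pow by lra.
        replace (ln (INR K) / ln q1 * (INR n * ln q1)) with (INR n * ln (INR K)) by (field; lra).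
        rewrite <- (Rpower_pow n (INR K)) by lra. reflexivity. }
      rewrite EP. split.
      * destruct n as [|m] eqn:En.
        -- simpl. assert (1 <= INR r) by (replace 1 with (INR 1) by reflexivity; apply le_INR; lia).
           assert (/ INR K < 1) by (rewrite <- Rinv_1; apply Rinv_lt_contravar; lra). lra.
        -- pose proof (lower K q1 f HK Hq Hf r Hr) as Hlo. rewrite <- Hnd in Hlo.
           assert (Hlo' : (K ^ m <= r - 1)%nat) by (replace m with (S m - 1)%nat by lia; apply Hlo; lia).
           apply le_INR in Hlo'. rewrite pow_INR, minus_INR in Hlo' by lia. simpl in Hlo'.
           simpl. replace (/ INR K * (INR K * INR K ^ m)) with (INR K ^ m) by (field; lra). lra.
      * pose proof (upper K q1 f HK Hq Hf r Hr) as Hup. rewrite <- Hnd in Hup.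
        pose proof (SS_id K (S n) ltac:(lia)) as Hid.
        apply le_INR in Hup. apply (f_equal INR) in Hid.
        rewrite plus_INR, mult_INR, pow_INR in Hid. rewrite minus_INR in Hid by lia. rewrite <- tech_pow_Rmult in Hid. change (INR 1) with 1 in Hid.
        assert (H1 : INR r * (INR K - 1) < INR K * INR K ^ n).
        { assert (INR r * (INR K - 1) <= INR (SS K (S n)) * (INR K - 1)) by (apply Rmult_le_compat_r; lra). lra. }
        replace (INR r) with (INR r * (INR K - 1) / (INR K - 1)) by (field; lra).
        replace (INR K / (INR K - 1) * INR K ^ n) with (INR K * INR K ^ n / (INR K - 1)) by (field; lra).
        unfold Rdiv. apply Rmult_lt_compat_r; [apply Rinv_0_lt_compat; lra| exact H1].
    + apply ident; auto.
  - intros eps Heps.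
    set (M := Rabs (ln (1 - s)) / eps).
    destruct (archimed (exp M)) as [Ha _].
    assert (Hpos : (0 < up (exp M))%Z) by (apply lt_IZR; pose proof (exp_pos M); simpl; lra).
    exists (Nat.max 2 (Z.to_nat (up (exp M)))). intros n Hn.
    assert (HN : INR (Z.to_nat (up (exp M))) = IZR (up (exp M))).
    { rewrite INR_IZR_INZ, Z2Nat.id; [reflexivity| lia]. }
    assert (Hn' : INR (Z.to_nat (up (exp M))) <= INR n) by (apply le_INR; lia).
    assert (HKr : 2 <= INR n) by (replace 2 with (INR 2) by (simpl; ring); apply le_INR; lia).
    assert (Hln : M < ln (INR n)).
    { rewrite <- (ln_exp M). apply ln_increasing; [apply exp_pos| lra]. }
    assert (HM : 0 <= M) by (unfold M; unfold Rdiv; apply Rmult_le_pos; [apply Rabs_pos| left; apply Rinv_0_lt_compat; lra]).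
    unfold R_dist. rewrite ident by (auto; lia).
    replace (ln (1 - s) / ln (INR n) - 1 - -1) with (ln (1 - s) / ln (INR n)) by ring.
    assert (HeM : eps * M = Rabs (ln (1 - s))) by (unfold M; field; lra).
    assert (Hb : Rabs (ln (1 - s)) < eps * ln (INR n)) by nra.
    apply Rabs_def1.
    + apply (Rmult_lt_reg_r (ln (INR n))); [lra|]. unfold Rdiv. rewrite Rmult_assoc, Rinv_l by lra.
      pose proof (Rle_abs (ln (1 - s))). lra.
    + apply (Rmult_lt_reg_r (ln (INR n))); [lra|]. unfold Rdiv. rewrite Rmult_assoc, Rinv_l by lra.
      pose proof (Rle_abs (- ln (1 - s))). rewrite Rabs_Ropp in H. lra.
Qed.
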